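(* In the truncated Gale–Shapley algorithm described in the context, for every round $i\ge1$: an edge $\{r,b\}\in E\setminus M_i$ with $r\in R$, $b\in B$ is unstable relative to $M_i$ only if $b$ belongs to $C_i(r)$ and $r$ is unmatched at the end of round $i$ (i.e. $p_i(r)=\bot$).
   Context: Instance: a simple bipartite graph $\mathcal{G}=(R\cup B,E)$ (red nodes $R$, blue nodes $B$) without isolated nodes, each node having a linear preference order on its neighbours. An edge $\{u,v\}\in E\setminus M$ is unstable relative to a matching $M$ if (i) $u$ is unmatched or prefers $v$ to its partner in $M$, and (ii) $v$ is unmatched or prefers $u$ to its partner in $M$. Algorithm (distributed Gale–Shapley): each blue $b$ keeps $p(b)$ (current partner or $\bot$), initially $\bot$. Each red $r$ keeps a list $C(r)$, initially all neighbours in decreasing preference; $c(r)$ (candidate awaiting response, or $\bot$), initially $\bot$; $p(r)$ (partner or $\bot$), initially $\bot$. Each round consists of a blue turn then a red turn. Blue turn, for each $b$: let $P$ be the set of neighbours that sent `propose'; if $P=\emptyset$ do nothing. Otherwise let $Q=P\cup\{p(b)\}$ if $p(b)\ne\bot$, else $Q=P$; let $q$ be $b$'s most preferred node in $Q$; if $q\ne p(b)$, send `break' to $p(b)$ (if $p(b)\ne\bot$), send `accept' to $q$, and set $p(b)\gets q$; send `reject' to every $r\in P\setminus\{q\}$. Red turn, for each $r$: (1) if $c(r)\neq\bot$, receive the message from $c(r)$; if `accept' set $p(r)\gets c(r)$; if `reject' remove $c(r)$ from $C(r)$; then set $c(r)\gets\bot$. (2) If $p(r)\ne\bot$ and $p(r)$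 sent `break', remove $p(r)$ from $C(r)$ and set $p(r)\gets\bot$. (3) If $p(r)=\bot$ and $C(r)$ is nonempty, set $c(r)$ to the first element of $C(r)$ and send `propose' to it. Notation: a subscript $i$ denotes the value at the end of round $i$ (e.g. $C_i(r)$, $p_i(r)$), and $M_i=\{\{r,p_i(r)\}: r\in R,\ p_i(r)\ne\bot\}$ is the matching at the end of round $i$. *)

(* Defs.v *)
From mathcomp Require Import all_boot.
Set Implicit Arguments. Unset Strict Implicit. Unset Printing Implicit Defensive.

(* The preference order of a red node r is the
   list prefR r of its neighbours in decreasing preference (most preferred
   first); similarly prefB b for a blue node b. *)

Definition prefersR (R B : eqType) (prefR : R -> seq B) (r : R) (b1 b2 : B) :=
  index b1 (prefR r) < index b2 (prefR r).
Definition prefersB (R B : eqType) (prefB : B -> seq R) (b : B) (r1 r2 : R) :=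
  index r1 (prefB b) < index r2 (prefB b).

(* Algorithm state at the end of a round.  None plays the role of bot.
   pB = p(b), CR = C(r), cR = c(r), pR = p(r). *)
Record state (R B : Type) := State {
  pB : B -> option R;
  CR : R -> seq B;
  cR : R -> option B;
  pR : R -> option B }.

Section Round.
Variables (R B : finType) (prefB : B -> seq R) (s : state R B).

(* The 'propose' messages sent during the red turn are exactly those sent by r
   to c(r) (c(r) is reset to bot at step (1) and only set in step (3), when
   'propose' is sent to it). *)
Definition proposers (b : B) : {set R} := [set r | cR s r == Some b].

Definition blue_new (b : B) : option R :=
  let P := proposers b in
  if P == set0 then pB s b else
  let Q := P :|: (if pB s b is Some r then [set r] else set0) in
  [pick q in Q | [forall r in Q, index q (prefB b) <= index r (prefB b)]].

Definition accept_msg (b : B) (r : R) : bool :=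
  (blue_new b == Some r) && (pB s b != Some r).
Definition reject_msg (b : B) (r : R) : bool :=
  (r \in proposers b) && (blue_new b != Some r).
Definition break_msg (b : B) (r : R) : bool :=
  (pB s b == Some r) && (blue_new b != Some r).

Definition red_new (r : R) : seq B * option B * option B :=
  let '(C1, p1) :=
    match cR s r with
    | Some b => (if reject_msg b r then rem b (CR s r) else CR s r,
                 if accept_msg b r then Some b else pR s r)
    | None => (CR s r, pR s r)
    end in
  let '(C2, p2) :=
    match p1 with
    | Some b' => if break_msg b' r then (rem b' C1, None) else (C1, p1)
    | None => (C1, p1)
    end in
  let c3 := if p2 is None then (if C2 is b0 :: _ then Some b0 else None)
            else None in
  (C2, c3, p2).

Definition round : state R B :=
  State blue_new (fun r => (red_new r).1.1) (fun r => (red_new r).1.2)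
        (fun r => (red_new r).2).
End Round.

Definition init_state (R B : finType) (prefR : R -> seq B) : state R B :=
  State (fun _ => None) prefR (fun _ => None) (fun _ => None).

Definition gs_state (R B : finType) (prefR : R -> seq B) (prefB : B -> seq R)
    (i : nat) : state R B :=
  iter i (round prefB) (init_state prefR).

(* The matching M_i is {{r, p_i(r)} : p_i(r) <> bot}; it is given here by the
   function M := p_i.  Edge {r,b} is unstable relative to M. *)
Definition unstable (R B : finType) (adj : R -> B -> bool)
    (prefR : R -> seq B) (prefB : B -> seq R) (M : R -> option B)
    (r : R) (b : B) : Prop :=
  [/\ adj r b,
      M r <> Some b,
      (forall b', M r = Some b' -> prefersR prefR r b b') &
      (forall r', M r' = Some b -> prefersB prefB b r r')].

(* Main.v *)
Require Import Defs.
From mathcomp Require Import all_boot.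
Set Implicit Arguments. Unset Strict Implicit.

Lemma index_ge_drop (T : eqType) (s : seq T) k x :
  uniq s -> x \in drop k s -> k <= index x s.
Proof.
elim: s k => [|y s IH] [|k] //= /andP[ys us] Hx.
have xs : x \in s by exact: mem_drop Hx.
have -> : (y == x) = false by apply/negbTE; apply: contra ys => /eqP ->.
by rewrite ltnS; apply: IH.
Qed.

Lemma index_le_drop (T : eqType) (s : seq T) k x t :
  drop k s = x :: t -> index x s <= k.
Proof.
elim: s k => [|y s IH] [|k] //=.
  by case=> ->; rewrite eqxx.
by move=> /IH H; case: (y == x).
Qed.

Lemma index_eq_in (T : eqType) (s : seq T) x y :
  x \in s -> y \in s -> index x s = index y s -> x = y.
Proof.
by move=> Hx Hy E; rewrite -(nth_index x Hx) E (nth_index x Hy).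
Qed.

Lemma blue_spec (R B : finType) (prefB : B -> seq R) (s : state R B) b :
  (proposers s b == set0 /\ blue_new prefB s b = pB s b) \/
  (proposers s b != set0 /\ exists q, blue_new prefB s b = Some q /\
     (cR s q = Some b \/ pB s b = Some q) /\
     forall r, cR s r = Some b \/ pB s b = Some r ->
               index q (prefB b) <= index r (prefB b)).
Proof.
rewrite /blue_new; case: ifP => HP; [by left | right; split; first by []].
set Q := _ :|: _.
have memQ : forall r, (r \in Q) <-> (cR s r = Some b \/ pB s b = Some r).
  move=> r; rewrite /Q inE /proposers inE.
  case E: (pB s b) => [r0|]; rewrite ?inE ?orbF.
    split; first by case/orP => /eqP ->; [left|right].
    by case=> [->|[->]]; rewrite eqxx ?orbT.
  by split; [move/eqP; left | case=> // ->].
case/set0Pn: (negbT HP) => x; rewrite /proposers inE => /eqP Hx.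
have HxQ : x \in Q by apply/memQ; left.
case: pickP => [q /andP [Hq /forallP Hall] | H0].
  exists q; split=> //; split; first by apply/memQ.
  by move=> r /memQ Hr; move: (Hall r); rewrite Hr.
exfalso; case: (arg_minnP (fun q => index q (prefB b)) HxQ) => q Hq Hmin.
have Hq' : q \in Q := Hq. move: (H0 q) => /=. rewrite Hq' /= => /negP; apply; apply/forallP => r.
by apply/implyP => Hr; apply: Hmin.
Qed.

Definition hd_opt (T : Type) (s : seq T) : option T :=
  if s is x :: _ then Some x else None.

Record Inv (R B : finType) (prefR : R -> seq B) (prefB : B -> seq R)
  (s : state R B) : Prop := {
  IA : forall r, exists k, CR s r = drop k (prefR r);
  IBp : forall r b, pR s r = Some b -> exists t, CR s r = b :: t;
  IBc : forall r b, cR s r = Some b -> exists t, CR s r = b :: t;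
  IC : forall r b, pR s r = Some b <-> pB s b = Some r;
  ID : forall r, pR s r = None \/ cR s r = None;
  IE : forall r b, b \in prefR r -> b \notin CR s r ->
       exists r', pB s b = Some r' /\ index r' (prefB b) < index r (prefB b)
}.

Lemma red_cases (R B : finType) prefR prefB (s : state R B) r :
  Inv prefR prefB s ->
  let C := CR s r in
  (exists b, cR s r = Some b /\ pR s r = None /\ blue_new prefB s b = Some r /\
      pB s b != Some r /\ red_new prefB s r = (C, None, Some b))
  \/ (exists b, cR s r = Some b /\ pR s r = None /\ blue_new prefB s b != Some r /\
      red_new prefB s r = (rem b C, hd_opt (rem b C), None))
  \/ (exists b, cR s r = None /\ pR s r = Some b /\ pB s b = Some r /\
      blue_new prefB s b != Some r /\
      red_new prefB s r = (rem b C, hd_opt (rem b C), None))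
  \/ (exists b, cR s r = None /\ pR s r = Some b /\ blue_new prefB s b = Some r /\
      red_new prefB s r = (C, None, Some b))
  \/ (cR s r = None /\ pR s r = None /\ red_new prefB s r = (C, hd_opt C, None)).
Proof.
move=> I C; rewrite /red_new /C.
case Hc: (cR s r) => [b|].
  have Hp : pR s r = None by case: (ID I r) => //; rewrite Hc.
  have Hpb : pB s b != Some r.
    by apply/eqP => /(IC I); rewrite Hp.
  have Hprop : r \in proposers s b by rewrite /proposers inE Hc.
  rewrite /accept_msg /reject_msg /break_msg Hprop Hpb /= andbT.
  case: (boolP (blue_new prefB s b == Some r)) => Hbn /=.
    left; exists b; rewrite (eqP Hbn) eqxx /=; do 3 split => //.
    by rewrite (negbTE Hpb).
  right; left; exists b; rewrite Hp; do 3 split => //.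
  try by case: (rem b (CR s r)).
case Hp: (pR s r) => [b|].
  have Hpb : pB s b = Some r by apply/(IC I).
  rewrite /break_msg Hpb eqxx /=.
  case: (boolP (blue_new prefB s b != Some r)) => Hbn /=.
    right; right; left; exists b; do 4 split => //.
  right; right; right; left; exists b; do 3 split => //.
  by apply/eqP; rewrite negbK in Hbn.
right; right; right; right; do 2 split => //.
Qed.

Lemma blue_src (R B : finType) prefB (s : state R B) b r :
  blue_new prefB s b = Some r -> cR s r = Some b \/ pB s b = Some r.
Proof.
case: (blue_spec prefB s b) => [[_ ->]|[_ [q [-> [H _]]]]]; first by right.
by case=> <-.
Qed.

Lemma blue_mono (R B : finType) prefB (s : state R B) b r0 :
  pB s b = Some r0 -> exists r', blue_new prefB s b = Some r' /\
     index r' (prefB b) <= index r0 (prefB b).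
Proof.
move=> H; case: (blue_spec prefB s b) => [[_ ->]|[_ [q [-> [_ Hm]]]]].
  by exists r0.
by exists q; split => //; apply: Hm; right.
Qed.

Lemma inpref (R B : finType) (adj : R -> B -> bool) prefR prefB (s : state R B)
  (hR : forall r b, (b \in prefR r) = adj r b)
  (hB : forall b r, (r \in prefB b) = adj r b) r b :
  Inv prefR prefB s -> cR s r = Some b \/ pB s b = Some r -> r \in prefB b.
Proof.
move=> I H.
have [t Ht] : exists t, CR s r = b :: t.
  case: H => H; first exact: (IBc I H).
  by apply: (IBp I); apply/(IC I).
case: (IA I r) => k Hk.
have : b \in drop k (prefR r) by rewrite -Hk Ht mem_head.
by move/mem_drop; rewrite hR hB.
Qed.

Lemma blue_strict (R B : finType) (adj : R -> B -> bool) prefR prefB (s : state R B)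
  (hR : forall r b, (b \in prefR r) = adj r b)
  (hB : forall b r, (r \in prefB b) = adj r b) r b q :
  Inv prefR prefB s -> cR s r = Some b \/ pB s b = Some r ->
  blue_new prefB s b = Some q -> q != r ->
  index q (prefB b) < index r (prefB b).
Proof.
move=> I Hr Hq Hne.
case: (blue_spec prefB s b) => [[HP Hb]|[_ [q' [Hq' [Hsrc Hm]]]]].
  exfalso; case: Hr => Hr.
    have : r \in proposers s b by rewrite /proposers inE Hr.
    by rewrite (eqP HP) inE.
  by move: Hne; rewrite Hq in Hb; rewrite -Hb in Hr; case: Hr => ->; rewrite eqxx.
move: Hq; rewrite Hq' => -[Eq]; subst q'.
rewrite ltn_neqAle Hm // andbT; apply/negP => /eqP E.
move/negP: Hne; apply; apply/eqP; apply: (index_eq_in _ _ E).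
  exact: inpref hR hB _ _ I Hsrc.
exact: inpref hR hB _ _ I Hr.
Qed.

Lemma hd_opt_cons (T : Type) (X : seq T) b :
  hd_opt X = Some b -> exists t, X = b :: t.
Proof. by case: X => //= x t [<-]; exists t. Qed.

Lemma drop_step (T : eqType) (s : seq T) k b t :
  drop k s = b :: t -> drop k.+1 s = t.
Proof. by move=> H; rewrite -add1n -drop_drop H /= drop0. Qed.

Lemma Inv_init (R B : finType) prefR prefB :
  Inv prefR prefB (init_state (R:=R) (B:=B) prefR).
Proof.
split => //=; try by [move=> r; exists 0; rewrite drop0 | move=> r; left |
  move=> r b; split | move=> r b ->].
Qed.

Ltac rc I r :=
  case: (red_cases r I) =>
   [[b0 [Hc [Hp [Hbn [Hpb Er]]]]] | [[b0 [Hc [Hp [Hbn Er]]]] |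
   [[b0 [Hc [Hp [Hpb [Hbn Er]]]]] | [[b0 [Hc [Hp [Hbn Er]]]] | [Hc [Hp Er]]]]]];
  match goal with H : red_new _ _ _ = _ |- _ => rewrite H /= end.

Lemma Inv_round (R B : finType) (adj : R -> B -> bool) prefR prefB (s : state R B)
  (uR : forall r, uniq (prefR r))
  (hR : forall r b, (b \in prefR r) = adj r b)
  (hB : forall b r, (r \in prefB b) = adj r b) :
  Inv prefR prefB s -> Inv prefR prefB (round prefB s).
Proof.
move=> I; split => /=.
- move=> r; rc I r; try exact: (IA I r).
  + case: (IBc I Hc) => t Ht; case: (IA I r) => k Hk; exists k.+1.
    have H : drop k (prefR r) = b0 :: t by rewrite -Hk.
    by rewrite Ht /= eqxx (drop_step H).
  + case: (IBp I Hp) => t Ht; case: (IA I r) => k Hk; exists k.+1.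
    have H : drop k (prefR r) = b0 :: t by rewrite -Hk.
    by rewrite Ht /= eqxx (drop_step H).
- move=> r b; rc I r => // -[<-]; first by case: (IBc I Hc) => t ->; exists t.
  by case: (IBp I Hp) => t ->; exists t.
- move=> r b; rc I r => //; exact: hd_opt_cons.
- move=> r b; split.
  + rc I r => // -[<-] //.
  + move=> Hb; rc I r.
    * case: (blue_src Hb) => H; first by rewrite Hc in H.
      by move/(IC I): H; rewrite Hp.
    * case: (blue_src Hb) => H.
        by rewrite Hc in H; case: H => E; subst b0; rewrite Hb eqxx in Hbn.
      by move/(IC I): H; rewrite Hp.
    * case: (blue_src Hb) => H; first by rewrite Hc in H.
      move/(IC I): H; rewrite Hp => -[E]; subst b0.
      by rewrite Hb eqxx in Hbn.
    * case: (blue_src Hb) => H; first by rewrite Hc in H.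
      by move/(IC I): H; rewrite Hp => -[->].
    * case: (blue_src Hb) => H; first by rewrite Hc in H.
      by move/(IC I): H; rewrite Hp.
- by move=> r; rc I r; auto.
- move=> r b Hbr Hnot.
  have Hrb : r \in prefB b by rewrite hB -hR.
  case: (boolP (b \in CR s r)) => HbC; last first.
    case: (IE I Hbr HbC) => r0 [H0 Hlt]; case: (blue_mono prefB H0) => r' [H' Hle].
    by exists r'; split => //; exact: leq_ltn_trans Hle Hlt.
  case: (IA I r) => k Hk.
  have uC : uniq (CR s r) by rewrite Hk drop_uniq.
  move: Hnot; rc I r => Hnot; try by rewrite HbC in Hnot.
  + move: Hnot; rewrite (mem_rem_uniq _ uC) inE HbC andbT negbK => /eqP E; subst b0.
    case: (blue_spec prefB s b) => [[HP _] | [_ [q [Hq _]]]].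
      have : r \in proposers s b by rewrite /proposers inE Hc.
      by rewrite (eqP HP) inE.
    exists q; split => //; apply: (blue_strict hR hB I (or_introl Hc) Hq).
    by apply/eqP => E; move: Hbn; rewrite Hq E eqxx.
  + move: Hnot; rewrite (mem_rem_uniq _ uC) inE HbC andbT negbK => /eqP E; subst b0.
    case: (blue_mono prefB Hpb) => q [Hq _].
    exists q; split => //; apply: (blue_strict hR hB I (or_intror Hpb) Hq).
    by apply/eqP => E; move: Hbn; rewrite Hq E eqxx.
Qed.

Theorem lemma1 (R B : finType) (adj : R -> B -> bool)
    (prefR : R -> seq B) (prefB : B -> seq R)
    (hprefR : forall r, uniq (prefR r) /\ (forall b, (b \in prefR r) = adj r b))
    (hprefB : forall b, uniq (prefB b) /\ (forall r, (r \in prefB b) = adj r b))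
    (noisoR : forall r, exists b, adj r b)
    (noisoB : forall b, exists r, adj r b)
    (i : nat) (hi : 1 <= i) (r : R) (b : B) :
  unstable adj prefR prefB (pR (gs_state prefR prefB i)) r b ->
  b \in CR (gs_state prefR prefB i) r /\ pR (gs_state prefR prefB i) r = None.
Proof.
have uR x : uniq (prefR x) by case: (hprefR x).
have hR x b0 : (b0 \in prefR x) = adj x b0 by case: (hprefR x).
have hB b0 x : (x \in prefB b0) = adj x b0 by case: (hprefB b0).
have I : Inv prefR prefB (gs_state prefR prefB i).
  elim: i {hi} => [|n IH]; first exact: Inv_init.
  by rewrite /gs_state iterS; apply: (Inv_round uR hR hB).
set s := gs_state prefR prefB i in I *.
case=> Hadj Hneq Hpr Hpb.
have Hbr : b \in prefR r by rewrite hR.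
have HbC : b \in CR s r.
  apply/negPn/negP => Hn.
  case: (IE I Hbr Hn) => r' [H1 H2].
  have := Hpb r' (proj2 (IC I r' b) H1); rewrite /prefersB => H3.
  by move: (ltn_trans H2 H3); rewrite ltnn.
split => //.
case Ep: (pR s r) => [b'|] //.
exfalso.
have := Hpr b' Ep; rewrite /prefersR => Hlt.
case: (IBp I Ep) => t Ht; case: (IA I r) => k Hk.
have Hd : drop k (prefR r) = b' :: t by rewrite -Hk.
have H1 := index_le_drop Hd.
have H2 : k <= index b (prefR r) by apply: index_ge_drop (uR r) _; rewrite -Hk.
by move: (leq_trans H1 H2); rewrite leqNgt Hlt.
Qed.
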